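(* Let $\gamma\in(1,3)$ and $\mu\in(0,1)$. At the point $C=(U_C,H_C)=\big(\frac{2\mu}{\gamma+1},(\frac{\gamma-1}{\gamma+1})^2\mu^2\big)$, where $F=G=0$, the quadratic equation for the slope $s=\frac{dH}{dU}$ of integral curves of $\frac{dH}{dU}=\frac{F(H,U)}{G(H,U)}$, \[ G_H\,s^2+(G_U-F_H)\,s-F_U=0\quad\text{(coefficients evaluated at }C), \] i.e. $s=\frac{F_H-G_U\pm\sqrt{(G_U-F_H)^2+4F_UG_H}}{2G_H}$, has two distinct real roots; that is, there are two distinct branches of integral curves at $C$.
   Context: Set $k_1=\frac{(\gamma+1)+\mu(3-\gamma)}{2}$, $k_2=\frac{2(1-\mu)}{\gamma-1}$, $F(H,U)=2H[H-(U^2-k_1U+\mu)]$, $G(H,U)=H(U+k_2)-U(U-1)(U-\mu)$. The partial derivatives are $F_H=4H-2(U^2-k_1U+\mu)$, $F_U=-2H(2U-k_1)$, $G_H=U+k_2$, $G_U=H-3U^2+2(1+\mu)U-\mu$. *)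

(* Defs.v *)
From mathcomp Require Import all_boot all_order all_algebra.
Set Implicit Arguments. Unset Strict Implicit. Unset Printing Implicit Defensive.
Import Order.TTheory GRing.Theory Num.Theory.
Local Open Scope ring_scope.

Section Defs.
Variable R : realFieldType.
Variables gamma mu : R.

Definition k1 : R := ((gamma + 1) + mu * (3 - gamma)) / 2.
Definition k2 : R := 2 * (1 - mu) / (gamma - 1).

Definition Ffun (H U : R) : R := 2 * H * (H - (U ^+ 2 - k1 * U + mu)).
Definition Gfun (H U : R) : R := H * (U + k2) - U * (U - 1) * (U - mu).

Definition F_H (H U : R) : R := 4 * H - 2 * (U ^+ 2 - k1 * U + mu).
Definition F_U (H U : R) : R := - 2 * H * (2 * U - k1).
Definition G_H (H U : R) : R := U + k2.
Definition G_U (H U : R) : R := H - 3 * U ^+ 2 + 2 * (1 + mu) * U - mu.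

Definition U_C : R := 2 * mu / (gamma + 1).
Definition H_C : R := ((gamma - 1) / (gamma + 1)) ^+ 2 * mu ^+ 2.

Definition slope_quad (s : R) : R :=
  G_H H_C U_C * s ^+ 2 + (G_U H_C U_C - F_H H_C U_C) * s - F_U H_C U_C.
End Defs.

(* Main.v *)
Require Import Defs.
From mathcomp Require Import all_boot all_order all_algebra.
From mathcomp Require Import ring lra.
Import Order.TTheory GRing.Theory Num.Theory.
Local Open Scope ring_scope.

Theorem lemma3p3 (R : realFieldType) (gamma mu : R) :
  1 < gamma < 3 -> 0 < mu < 1 ->
  [/\ Ffun gamma mu (H_C gamma mu) (U_C gamma mu) = 0,
      Gfun gamma mu (H_C gamma mu) (U_C gamma mu) = 0,
      G_H gamma mu (H_C gamma mu) (U_C gamma mu) != 0 &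
      exists s1 s2 : R, [/\ s1 != s2,
        slope_quad gamma mu s1 = 0 & slope_quad gamma mu s2 = 0]].
Proof.
move=> /andP[g1 g3] /andP[m0 m1].
have gp : gamma + 1 != 0 by rewrite lt0r_neq0 //; lra.
have gm : gamma - 1 != 0 by rewrite lt0r_neq0 //; lra.
have mn : mu != 0 by rewrite lt0r_neq0.
have gh : gamma + 1 - 2 * mu != 0 by rewrite lt0r_neq0 //; lra.
have GHe : G_H gamma mu (H_C gamma mu) (U_C gamma mu) =
   2 * (gamma + 1 - 2 * mu) / ((gamma + 1) * (gamma - 1)).
  rewrite /G_H /U_C /k2; field; by rewrite gp gm.
have GHp : 0 < G_H gamma mu (H_C gamma mu) (U_C gamma mu).
  rewrite GHe divr_gt0 //; [lra | apply: mulr_gt0; lra].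
have FUe : F_U gamma mu (H_C gamma mu) (U_C gamma mu) =
   H_C gamma mu * ((gamma + 1) ^+ 2 - mu * (gamma ^+ 2 - 2 * gamma + 5)) / (gamma + 1).
  rewrite /F_U /U_C /k1; field; by rewrite gp.
have Hp : 0 < H_C gamma mu.
  rewrite /H_C; apply: mulr_gt0; apply: exprn_gt0 => //.
  apply: divr_gt0; lra.
have FUp : 0 < F_U gamma mu (H_C gamma mu) (U_C gamma mu).
  rewrite FUe; apply: divr_gt0; last lra.
  apply: mulr_gt0 => //; nra.
set s1 := mu * (gamma - 1) ^+ 2 / (gamma + 1).
have s1p : 0 < s1 by rewrite /s1 divr_gt0 //; [apply: mulr_gt0 => //; apply: exprn_gt0; lra| lra].
have q1 : slope_quad gamma mu s1 = 0.
  rewrite /slope_quad /s1 /G_H /G_U /F_H /F_U /H_C /U_C /k1 /k2; field; by rewrite gp gm.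
split.
- rewrite /Ffun /H_C /U_C /k1; field; by rewrite gp.
- rewrite /Gfun /H_C /U_C /k2; field; by rewrite gp gm.
- by rewrite lt0r_neq0.
exists s1, (- F_U gamma mu (H_C gamma mu) (U_C gamma mu) /
            (G_H gamma mu (H_C gamma mu) (U_C gamma mu) * s1)).
split => //.
- apply/negP => /eqP E.
  have : - F_U gamma mu (H_C gamma mu) (U_C gamma mu) /
            (G_H gamma mu (H_C gamma mu) (U_C gamma mu) * s1) < 0.
    by rewrite mulNr oppr_lt0 divr_gt0 // mulr_gt0.
  rewrite -E; lra.
- move: q1; rewrite /slope_quad => q1.
  set a := G_H gamma mu (H_C gamma mu) (U_C gamma mu) in q1 GHp *.
  set b := (G_U mu (H_C gamma mu) (U_C gamma mu) - F_H gamma mu (H_C gamma mu) (U_C gamma mu)) in q1 *.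
  set c := F_U gamma mu (H_C gamma mu) (U_C gamma mu) in q1 FUp *.
  have an : a != 0 by rewrite lt0r_neq0.
  have sn : s1 != 0 by rewrite lt0r_neq0.
  have E : - c / (a * s1) = (- b / a) - s1.
    apply: (mulfI sn); apply: (mulfI an).
    have -> : c = a * s1 ^+ 2 + b * s1 by move: q1 => /eqP; rewrite subr_eq0 => /eqP <-.
    field; by rewrite an sn.
  rewrite E.
  have -> : c = a * s1 ^+ 2 + b * s1 by move: q1 => /eqP; rewrite subr_eq0 => /eqP <-.
  field; by rewrite an.
Qed.
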